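(* Let $\omega\ge2$ and let $\Gamma$ be a finite simple graph on $n$ vertices that is $k$-regular and $\omega$-clique regular, whose smallest adjacency eigenvalue $\lambda_1$ has multiplicity $a_1$. Then $\lambda_1\ge\frac{-k}{\omega-1}$. If moreover $k<\omega(\omega-1)$, then $\lambda_1=\frac{-k}{\omega-1}$ and $a_1\ge n-\frac{nk}{\omega(\omega-1)}$.
   Context: A graph is $\omega$-clique regular if it has a nonempty edge set and every edge lies in exactly one clique of order $\omega$. *)

(* Defs.v *)
From HB Require Import structures.
From mathcomp Require Import all_boot all_order all_algebra.
From mathcomp Require Import reals.
Set Implicit Arguments. Unset Strict Implicit. Unset Printing Implicit Defensive.
Import Order.TTheory GRing.Theory Num.Theory.

Definition simple_graph (n : nat) (adj : rel 'I_n) : Prop :=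
  symmetric adj /\ irreflexive adj.

Definition k_regular (n : nat) (adj : rel 'I_n) (k : nat) : Prop :=
  forall x : 'I_n, #|[set y | adj x y]| = k.

Definition is_clique (n : nat) (adj : rel 'I_n) (S : {set 'I_n}) : bool :=
  [forall x in S, forall y in S, (x != y) ==> adj x y].

Definition clique_regular (n : nat) (adj : rel 'I_n) (omega : nat) : Prop :=
  (exists x y : 'I_n, adj x y) /\
  forall x y : 'I_n, adj x y ->
    #|[set S : {set 'I_n} | [&& x \in S, y \in S, is_clique adj S
                              & #|S| == omega]]| = 1.

Definition adjmx (R : realType) (n : nat) (adj : rel 'I_n) : 'M[R]_n :=
  \matrix_(i, j) ((adj i j)%:R)%R.

(* Main.v *)
Require Import Defs.
From HB Require Import structures.
From mathcomp Require Import all_boot all_order all_algebra.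
From mathcomp Require Import reals.
Import Order.TTheory GRing.Theory Num.Theory.
Set Implicit Arguments. Unset Strict Implicit. Unset Printing Implicit Defensive.

Definition cliques (n : nat) (adj : rel 'I_n) (omega : nat) : {set {set 'I_n}} :=
  [set S | is_clique adj S && (#|S| == omega)].

Lemma sum_bool_card (T : finType) (A : {set T}) (P : pred T) :
  (\sum_(S in A) (P S : nat) = #|[set S in A | P S]|)%N.
Proof.
rewrite -sum1dep_card big_mkcondr /=; apply: eq_big => [S|S _]; first by [].
by case: (P S).
Qed.

Lemma sum_bool_cardT (T : finType) (P : pred T) :
  (\sum_S (P S : nat) = #|[set S | P S]|)%N.
Proof.
rewrite -sum1dep_card [RHS]big_mkcond /=; apply: eq_bigr => S _.
by case: (P S).
Qed.

Lemma pair_count n (adj : rel 'I_n) omega (x y : 'I_n) :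
  simple_graph adj -> clique_regular adj omega -> x != y ->
  #|[set S in cliques adj omega | (x \in S) && (y \in S)]| = (adj x y : nat).
Proof.
move=> [sym irr] [_ cr] xy.
case Axy: (adj x y).
  rewrite /= -(cr x y Axy); apply: eq_card => S; rewrite !inE.
  by rewrite [LHS]andbC -!andbA.
apply/eqP; rewrite cards_eq0; apply/eqP/setP => S; rewrite !inE.
apply/negbTE; apply/negP => /andP[/andP[cl _] /andP[xS yS]].
move: cl => /forallP/(_ x)/implyP/(_ xS)/forallP/(_ y)/implyP/(_ yS)/implyP/(_ xy).
by rewrite Axy.
Qed.

Lemma cdeg_eq n (adj : rel 'I_n) omega k (x : 'I_n) :
  simple_graph adj -> k_regular adj k -> clique_regular adj omega ->
  (#|[set S in cliques adj omega | x \in S]| * (omega - 1) = k)%N.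
Proof.
move=> sg kr cr.
rewrite -sum_nat_const.
transitivity (\sum_(S in [set S in cliques adj omega | x \in S]) \sum_y ((y \in S) && (y != x) : nat))%N.
  apply: eq_bigr => S; rewrite !inE => /andP[/andP[_ /eqP cS] xS].
  rewrite sum_bool_cardT -cS (cardsD1 x S) xS add1n subn1 /=.
  by apply: eq_card => y; rewrite !inE andbC.
rewrite exchange_big /= -(kr x) -sum1_card [RHS]big_mkcond /=.
apply: eq_bigr => y _.
rewrite (sum_bool_card _ (fun S : {set 'I_n} => (y \in S) && (y != x))) inE.
case: (eqVneq y x) => [->|yx].
  rewrite (proj2 sg x) /=; apply/eqP; rewrite cards_eq0; apply/eqP/setP => S.
  by rewrite in_set0 inE; apply/negbTE/andP => -[_ /andP[]].
rewrite -[RHS]/(nat_of_bool (adj x y)) -(pair_count sg cr (x:=x) (y:=y)); last by rewrite eq_sym.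
by apply: eq_card => S; rewrite !inE /= andbT -andbA.
Qed.

Lemma total_count n (adj : rel 'I_n) omega k :
  simple_graph adj -> k_regular adj k -> clique_regular adj omega ->
  (#|cliques adj omega| * omega * (omega - 1) = n * k)%N.
Proof.
move=> sg kr cr.
transitivity (\sum_(x : 'I_n) #|[set S in cliques adj omega | x \in S]| * (omega - 1))%N.
  rewrite -big_distrl /=; congr (_ * _)%N.
  rewrite -sum_nat_const.
  transitivity (\sum_(S in cliques adj omega) \sum_(x : 'I_n) (x \in S : nat))%N.
    apply: eq_bigr => S; rewrite inE => /andP[_ /eqP <-].
    by rewrite sum_bool_cardT; apply: eq_card => y; rewrite !inE.
  rewrite exchange_big /=; apply: eq_bigr => x _.
  by rewrite (sum_bool_card _ (fun S : {set 'I_n} => x \in S)).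
rewrite (eq_bigr (fun _ => k)) ?sum_nat_const ?card_ord // => x _.
exact: cdeg_eq.
Qed.

Local Open Scope ring_scope.

Lemma key_identity (R : realType) n (adj : rel 'I_n) omega k :
  (2 <= omega)%N -> simple_graph adj -> k_regular adj k -> clique_regular adj omega ->
  let C := cliques adj omega in
  let N : 'M[R]_(n, #|C|) := \matrix_(x, j) ((x \in (enum_val j : {set 'I_n})) : nat)%:R in
  N *m N^T = adjmx R adj + (k%:R / (omega%:R - 1))%:M.
Proof.
move=> w2 sg kr cr C N.
have w1 : (omega%:R - 1 : R) != 0.
  by rewrite -(natrB R (ltnW w2)) pnatr_eq0 subn_eq0 -ltnNge.
apply/matrixP => x y; rewrite !mxE.
rewrite (eq_bigr (fun j => (((x \in (enum_val j : {set 'I_n})) && (y \in (enum_val j : {set 'I_n}))) : nat)%:R)); last first.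
  by move=> j _; rewrite !mxE; case: (x \in _); case: (y \in _); rewrite ?mulr1 ?mulr0 ?mul0r.
rewrite -(big_enum_val (fun S : {set 'I_n} => (((x \in S) && (y \in S)) : nat)%:R)) /=.
rewrite -natr_sum (sum_bool_card _ (fun S : {set 'I_n} => (x \in S) && (y \in S))).
case: (eqVneq x y) => [<-|xy].
  rewrite (proj2 sg x) add0r mulr1n.
  have := cdeg_eq x sg kr cr => /(congr1 (fun z => z%:R : R)).
  rewrite natrM natrB ?(ltnW w2) // => <-.
  rewrite mulfK //.
  by congr (_%:R); apply: eq_card => S; rewrite !inE andbb.
by rewrite (pair_count sg cr xy) mulr0n addr0.
Qed.

Theorem corollary3 (R : realType) (n : nat) (adj : rel 'I_n) (k omega : nat)
  (lambda1 : R) :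
  (2 <= omega)%N ->
  simple_graph adj ->
  k_regular adj k ->
  clique_regular adj omega ->
  eigenvalue (adjmx R adj) lambda1 ->
  (forall mu : R, eigenvalue (adjmx R adj) mu -> lambda1 <= mu) ->
  - (k%:R : R) / (omega%:R - 1) <= lambda1 /\
  ((k < omega * (omega - 1))%N ->
     lambda1 = - (k%:R : R) / (omega%:R - 1) /\
     (n%:R : R) - (n * k)%:R / (omega * (omega - 1))%:R
       <= (\rank (eigenspace (adjmx R adj) lambda1))%:R).
Proof.
move=> w2 sg kr cr ev1 minl.
pose C := cliques adj omega.
pose N : 'M[R]_(n, #|C|) := \matrix_(x, j) ((x \in (enum_val j : {set 'I_n})) : nat)%:R.
pose r : R := k%:R / (omega%:R - 1).
have KI : N *m N^T = adjmx R adj + r%:M := key_identity R w2 sg kr cr.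
set A := adjmx R adj in KI ev1 minl *.
have -> : - (k%:R : R) / (omega%:R - 1) = - r by rewrite mulNr.
have part1 : - r <= lambda1.
  move/eigenvalueP: ev1 => [v vA vn0].
  have e1 : v *m (N *m N^T) = (lambda1 + r) *: v.
    by rewrite KI mulmxDr vA mul_mx_scalar scalerDl.
  have e2 : ((v *m N) *m (v *m N)^T) 0 0 = (lambda1 + r) * (v *m v^T) 0 0.
    by rewrite trmx_mul mulmxA -(mulmxA v) e1 -scalemxAl mxE.
  have s1 : 0 <= ((v *m N) *m (v *m N)^T) 0 0.
    by rewrite mxE; apply: sumr_ge0 => j _; rewrite [X in _ * X]mxE -expr2 sqr_ge0.
  have s2 : 0 < (v *m v^T) 0 0.
    rewrite mxE lt0r; apply/andP; split; last first.
      by apply: sumr_ge0 => j _; rewrite [X in _ * X]mxE -expr2 sqr_ge0.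
    apply: contra vn0 => /eqP s0; apply/eqP/matrixP => i j.
    rewrite (ord1 i) mxE.
    have s0' : \sum_(l | xpredT l) v 0 l ^+ 2 = 0.
      by rewrite -[RHS]s0; apply: eq_bigr => l _; rewrite expr2 [v^T _ _]mxE.
    have := psumr_eq0P (fun l _ => sqr_ge0 (v 0 l)) s0' (i:=j) isT.
    by move/eqP; rewrite sqrf_eq0 => /eqP.
  by rewrite -subr_ge0 opprK -(pmulr_lge0 _ s2) -e2.
split => // kW.
have tc := total_count sg kr cr; rewrite -/C in tc.
have Wpos : (0 < omega * (omega - 1))%N by rewrite muln_gt0 subn_gt0 ltnW.
have n0 : (0 < n)%N by case: cr => -[x _] _; apply: leq_ltn_trans (ltn_ord x).
have mn : (#|C| < n)%N.
  by rewrite -(ltn_pmul2r Wpos) mulnA tc ltn_pmul2l.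
have eig : A - (- r)%:M = N *m N^T by rewrite KI (raddfN (@scalar_mx R n)) opprK.
have rk : (n <= \rank (eigenspace A (- r)) + #|C|)%N.
  rewrite /eigenspace eig mxrank_ker.
  have := leq_trans (mxrankM_maxl N N^T) (rank_leq_col N).
  by move=> h; rewrite addnC -leq_subLR; apply: leq_sub2l.
have evr : eigenvalue A (- r).
  rewrite /eigenvalue -mxrank_eq0 -lt0n.
  case: (posnP (\rank (eigenspace A (- r)))) => [h0|] //.
  by move: rk; rewrite h0 add0n leqNgt mn.
have lam : lambda1 = - r by apply/eqP; rewrite eq_le part1 minl.
split => //; rewrite lam.
have -> : (n * k)%:R / (omega * (omega - 1))%:R = (#|C|%:R : R).
  by rewrite -tc -mulnA natrM mulfK // pnatr_eq0 -lt0n.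
by rewrite lerBlDr -natrD ler_nat.
Qed.
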